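(* Let $\Phi$ be an atomic CSP and $\pi$ an admissible projection scheme. Let $(X_t,Y_t)_{t\ge0}$ be the optimal one-step coupling of two copies of the Glauber dynamics for $\mu_\pi$ with arbitrary initial states $X_0,Y_0$. If $(v,t)\in U\cap D$, then there exists a path $C^1,C^2,\dots,C^k$ in $G(\mathcal{C})$ such that: $v\in\mathrm{vbl}(C^1)$; each $C^i$ is not satisfied in at least one of $X_{t-1}^{-v}$ and $Y_{t-1}^{-v}$; and $\mathrm{vbl}(C^k)$ contains some $u\neq v$ with $X_{t-1}(u)\neq Y_{t-1}(u)$.
   Context: CSP notation: $\Phi=(V,(\Omega_v),\mathcal{C})$, constraints depending only on $\mathrm{vbl}(C)$; atomic: each $C$ has a unique violating assignment $\boldsymbol{C}\in\prod_{v\in\mathrm{vbl}(C)}\Omega_v$; degree $\Delta=\max_C|\{C':\mathrm{vbl}(C)\cap\mathrm{vbl}(C')\ne\emptyset\}|$; $\mu_\Phi$ uniform on satisfying assignments. Projection scheme $\pi_v:\Omega_v\to Q_v$ ($Q_v$ finite, nonempty); $\mathbb{P}_\pi,\mu_\pi$ pushforwards under $\pi$ of the uniform distribution on $\prod_v\Omega_v$ and of $\mu_\Phi$; $\boldsymbol{C}_\pi(v)=\pi_v(\boldsymbol{C}(v))$; $b(C)=\prod_{u\in\mathrm{vbl}(C)}|\pi_u^{-1}(\boldsymbol{C}_\pi(u))|^{-1}$, $b=\max_Cb(C)$; $q_{\mathrm{TV}}=\max_{v,Y}d_{\mathrm{TV}}(\mathbb{P}_\pi[\mathrm{value}(v)=\cdot],\mu_\pi[\mathrm{value}(v)=\cdot\mid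 Y^{-v}])$ where $Y^{-v}$ is $Y$ with coordinate $v$ removed and the conditioning is on the other coordinates; $\overline{\mathrm{vbl}}(C)=\{v\in\mathrm{vbl}(C):|Q_v|>1\}$; $\zeta(C)=\max\{1,\max_{v\in\overline{\mathrm{vbl}}(C)}\min(\frac{(1-3b)^\Delta q_{\mathrm{TV}}}{\mathbb{P}_\pi[\mathrm{value}(v)=\boldsymbol{C}_\pi(v)]},2\Delta)\}$. Admissible (parameter $\eta\in(0,1/2)$): (A1) $b\le\eta/(300\Delta)$; (A2) there is $\kappa\ge4\log(3000\Delta)$, $\kappa\le K(\log\Delta+\log\max|Q_v|+\log\max|\mathrm{vbl}(C)|)$ ($K$ universal) with $|\overline{\mathrm{vbl}}(C)|^2\kappa^2\zeta(C)\prod_{v\in\overline{\mathrm{vbl}}(C)}((1-3b)^{-\Delta}\mathbb{P}_\pi[\mathrm{value}(v)=\boldsymbol{C}_\pi(v)]+e^{-\kappa/3})\le(60000\Delta)^{-2}$ for all $C$; (A3) for $v\in\mathrm{vbl}(C)\cap\mathrm{vbl}(C')$, $\frac12\mathbb{P}_\pi[\mathrm{value}(v)=\boldsymbol{C}_\pi(v)]\le\mathbb{P}_\pi[\mathrm{value}(v)=\boldsymbol{C}'_\pi(v)]\le2\mathbb{P}_\pi[\mathrm{value}(v)=\boldsymbol{C}_\pi(v)]$; (A4) $\pi_v$ computable and fibres samplable in time $K\log|\Omega_v|$. $G(\mathcal{C})$ is the graph on $\mathcal{C}$ with $C\ne C'$ adjacent iff $\mathrm{vbl}(C)\cap\mathrm{vbl}(C')\ne\emptyset$;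 a path is a sequence of constraints with consecutive ones adjacent. A partial assignment $Z$ (defined on a subset of $V$) does not satisfy $C$ if $Z(w)=\boldsymbol{C}_\pi(w)$ for all $w\in\mathrm{vbl}(C)$ at which $Z$ is defined. The optimal one-step coupling: given $(X_{t-1},Y_{t-1})$, choose $v\in V$ uniformly at random ($v$ is ''updated at time $t$''), set $X_t(w)=X_{t-1}(w)$, $Y_t(w)=Y_{t-1}(w)$ for $w\ne v$, and draw $(X_t(v),Y_t(v))$ from an optimal (total-variation-achieving) coupling of $\mu_\pi[\mathrm{value}(v)=\cdot\mid X_{t-1}^{-v}]$ and $\mu_\pi[\mathrm{value}(v)=\cdot\mid Y_{t-1}^{-v}]$. $U=\{(v,t): v\text{ is updated at time }t\}$ and $D=\{(v,t):X_t(v)\ne Y_t(v)\}$. *)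

(* Defs.v *)
From HB Require Import structures.
From mathcomp Require Import all_boot all_order all_algebra.
From mathcomp Require Import all_classical all_reals all_analysis.
Set Implicit Arguments. Unset Strict Implicit. Unset Printing Implicit Defensive.
Import Order.TTheory GRing.Theory Num.Theory.
Local Open Scope ring_scope.

Section CSPDefs.
Variable R : realType.
Variable V : finType.
Variable Om : V -> finType.
Variable Q : V -> finType.
Variable pi : forall v, Om v -> Q v.
(* atomic CSP: constraints indexed by I, constraint c has variable set vbl c
   and unique violating assignment (bad c) restricted to vbl c *)
Variable I : finType.
Variable vbl : I -> {set V}.
Variable bad : forall (c : I) (v : V), Om v.

Definition Assign := {dffun forall v : V, Om v}.
Definition PAssign := {dffun forall v : V, Q v}.

Definition viol (c : I) (s : Assign) : bool := [forall w in vbl c, s w == bad c w].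
Definition satb (s : Assign) : bool := [forall c : I, ~~ viol c s].

Definition degree : nat :=
  \max_(c : I) #|[set c' : I | ~~ [disjoint vbl c & vbl c']]|.

Definition fib (v : V) (q : Q v) : nat := #|[set x : Om v | pi x == q]|.

(* P_pi[value(v) = q] under the uniform product distribution *)
Definition Pmarg (v : V) (q : Q v) : R := (fib q)%:R / (#|Om v|)%:R.

Definition Cpi (c : I) (v : V) : Q v := pi (bad c v).

Definition bC (c : I) : R := \prod_(u in vbl c) ((fib (Cpi c u))%:R)^-1.
Definition bmax : R := \big[Num.max/0]_(c : I) bC c.

Definition compat (v : V) (Y : PAssign) (s : Assign) : bool :=
  [forall w, (w != v) ==> (pi (s w) == Y w)].

(* mu_pi[value(v) = a | Y^{-v}], mu_Phi uniform on satisfying assignments *)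
Definition condnum (v : V) (Y : PAssign) (a : Q v) : nat :=
  #|[set s : Assign | [&& satb s, compat v Y s & pi (s v) == a]]|.
Definition condden (v : V) (Y : PAssign) : nat :=
  #|[set s : Assign | satb s && compat v Y s]|.
Definition cond (v : V) (Y : PAssign) (a : Q v) : R :=
  (@condnum v Y a)%:R / (condden v Y)%:R.

Definition dTV (T : finType) (p q : T -> R) : R := 2^-1 * \sum_(a : T) `|p a - q a|.

Definition qTV : R :=
  \big[Num.max/0]_(v : V) \big[Num.max/0]_(Y : PAssign) dTV (@Pmarg v) (@cond v Y).

Definition vblbar (c : I) : {set V} := [set v in vbl c | 1 < #|Q v|]%N.

Definition zeta (c : I) : R :=
  \big[Num.max/1]_(v in vblbar c)
     Num.min ((1 - 3 * bmax) ^+ degree * qTV / Pmarg (Cpi c v)) (2 * degree%:R).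

Definition maxQ : nat := \max_(v : V) #|Q v|.
Definition maxvbl : nat := \max_(c : I) #|vbl c|.

Definition admissible (K eta : R) : Prop :=
  [/\ bmax <= eta / (3 * 10 ^+ 2 * degree%:R),
      exists kappa : R,
        [/\ 4 * ln (3 * 10 ^+ 3 * degree%:R) <= kappa,
            kappa <= K * (ln degree%:R + ln maxQ%:R + ln maxvbl%:R) &
            forall c : I,
              (#|vblbar c|%:R) ^+ 2 * kappa ^+ 2 * zeta c *
              \prod_(v in vblbar c)
                 ((1 - 3 * bmax) ^- degree * Pmarg (Cpi c v) + expR (- (kappa / 3)))
              <= (6 * 10 ^+ 4 * degree%:R) ^- 2]
    & forall (c c' : I) (v : V), v \in vbl c -> v \in vbl c' ->
        Pmarg (Cpi c v) / 2 <= Pmarg (Cpi c' v) <= 2 * Pmarg (Cpi c v)].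

Definition is_opt_coupling (T : finType) (p q : T -> R) (nu : T -> T -> R) : Prop :=
  [/\ forall a b, 0 <= nu a b,
      forall a, \sum_(b : T) nu a b = p a,
      forall b, \sum_(a : T) nu a b = q b &
      \sum_(a : T) \sum_(b : T | b != a) nu a b = dTV p q].

(* a (positive-probability) sample path of the optimal one-step coupling:
   vs t is the variable updated at time t >= 1, X t, Y t the states *)
Definition coupled_run (vs : nat -> V) (X Y : nat -> PAssign) : Prop :=
  forall t : nat, (0 < t)%N ->
    (forall w, w != vs t -> X t w = X t.-1 w /\ Y t w = Y t.-1 w) /\
    exists nu : Q (vs t) -> Q (vs t) -> R,
      is_opt_coupling (@cond (vs t) (X t.-1)) (@cond (vs t) (Y t.-1)) nu /\
      0 < nu (X t (vs t)) (Y t (vs t)).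

Definition not_sat_minus (Z : PAssign) (v : V) (c : I) : bool :=
  [forall w in vbl c, (w != v) ==> (Z w == Cpi c w)].

Definition adjC (c c' : I) : bool := (c != c') && ~~ [disjoint vbl c & vbl c'].

End CSPDefs.

(* Main.v *)
Require Import Defs.
From HB Require Import structures.
From mathcomp Require Import all_boot all_order all_algebra.
From mathcomp Require Import all_classical all_reals all_analysis.
Import Order.TTheory GRing.Theory Num.Theory.
Local Open Scope ring_scope.

Theorem lemma5p4 (R : realType) (V : finType) (Om Q : V -> finType)
    (pi : forall v, Om v -> Q v) (I : finType) (vbl : I -> {set V})
    (bad : forall (c : I) (v : V), Om v) (K eta : R) :
  0 < K -> 0 < eta < 2^-1 ->
  (forall v, (0 < #|Om v|)%N) ->
  admissible pi vbl bad K eta ->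
  forall (vs : nat -> V) (X Y : nat -> PAssign Q),
  coupled_run R pi vbl bad vs X Y ->
  forall (v : V) (t : nat), (0 < t)%N -> vs t = v -> X t v != Y t v ->
  exists (c1 : I) (cs : seq I),
    [/\ path (adjC vbl) c1 cs,
        v \in vbl c1,
        all (fun c => not_sat_minus pi vbl bad (X t.-1) v c
                      || not_sat_minus pi vbl bad (Y t.-1) v c) (c1 :: cs) &
        exists u : V, [/\ u \in vbl (last c1 cs), u != v & X t.-1 u != Y t.-1 u]].
Proof.
move=> _ _ _ _ vs X Y run v t t0 vst neq.
have [_ [nu [[nu0 nuA nuB nuD] pos]]] := run t t0.
subst v.
set v := vs t in neq nu nu0 nuA nuB nuD pos *.
set Xo := X t.-1 in nuA nuB nuD *.
set Yo := Y t.-1 in nuA nuB nuD *.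
apply: contrapT => Hno.
pose relevant := fun c => not_sat_minus pi vbl bad Xo v c
                      || not_sat_minus pi vbl bad Yo v c.
pose reach := fun u => exists (c1 : I) (cs : seq I),
   [/\ path (adjC vbl) c1 cs, v \in vbl c1, all relevant (c1 :: cs) &
       u \in vbl (last c1 cs)].
pose W := [set u | (u == v) || `[< reach u >]].
have vW : v \in W by rewrite inE eqxx.
have H1 : forall w, w \in W -> w != v -> Xo w = Yo w.
  move=> w; rewrite inE => /orP [/eqP -> | /asboolP [c1 [cs [p1 p2 p3 p4]]]].
    by rewrite eqxx.
  move=> wv; apply/eqP; apply/negP => ne; apply: Hno.
  exists c1, cs; split => //; exists w; split => //.
  by apply/negP.
have H2 : forall c, relevant c -> (vbl c \subset W) || [disjoint vbl c & W].
  move=> c rc; case: (boolP [disjoint vbl c & W]) => hd; first by rewrite orbT.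
  apply/orP; left.
  move: hd; rewrite -setI_eq0 => /set0Pn [u]; rewrite inE => /andP [uc].
  rewrite inE => /orP [/eqP uv | /asboolP [c1 [cs [p1 p2 p3 p4]]]].
    apply/fintype.subsetP => x xc; rewrite inE; apply/orP; right; apply/asboolP.
    exists c, [::]; split => //=; first by rewrite -uv.
    by rewrite rc.
  apply/fintype.subsetP => x xc; rewrite inE; apply/orP; right; apply/asboolP.
  case: (eqVneq (last c1 cs) c) => el.
    by exists c1, cs; split => //; rewrite el.
  exists c1, (rcons cs c); split => //.
  - rewrite rcons_path p1 /= /adjC el /=.
    apply/negP => /disjointFr /(_ p4); by rewrite uc.
  - by rewrite -rcons_cons all_rcons rc.
  - by rewrite last_rcons.
pose mix := fun (s r : Assign Om) => [ffun w => if w \in W then s w else r w] : Assign Om.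
have mixok : forall (Z1 Z2 : PAssign Q) s r,
    (forall w, w \in W -> w != v -> Z1 w = Z2 w) ->
    (forall c, not_sat_minus pi vbl bad Z2 v c -> (vbl c \subset W) || [disjoint vbl c & W]) ->
    satb vbl bad s -> compat pi v Z1 s -> satb vbl bad r -> compat pi v Z2 r ->
    satb vbl bad (mix s r) && compat pi v Z2 (mix s r).
  move=> Z1 Z2 s r HZ HC ss cs1 sr cr.
  have cm : compat pi v Z2 (mix s r).
    apply/forallP => w; apply/implyP => wv; rewrite ffunE; case: ifP => wW.
      by have := forallP cs1 w; rewrite wv /= => /eqP ->; rewrite HZ.
    by have := forallP cr w; rewrite wv.
  rewrite cm andbT; apply/forallP => c; apply/negP => vc.
  have rel : not_sat_minus pi vbl bad Z2 v c.
    apply/forallP => w; apply/implyP => wc; apply/implyP => wv.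
    have := forallP vc w; rewrite wc /= => /eqP e.
    have := forallP cm w; rewrite wv /= => /eqP <-.
    by rewrite e.
  case/orP: (HC c rel) => [sub|dis].
    have := forallP ss c; move=> /negP; apply.
    apply/forallP => w; apply/implyP => wc; have := forallP vc w.
    by rewrite wc ffunE (fintype.subsetP sub w wc).
  have := forallP sr c; move=> /negP; apply.
  apply/forallP => w; apply/implyP => wc; have := forallP vc w.
  by rewrite wc ffunE (disjointFr dis wc).
have H2X : forall c, not_sat_minus pi vbl bad Xo v c -> (vbl c \subset W) || [disjoint vbl c & W].
  by move=> c h; apply: H2; rewrite /relevant h.
have H2Y : forall c, not_sat_minus pi vbl bad Yo v c -> (vbl c \subset W) || [disjoint vbl c & W].
  by move=> c h; apply: H2; rewrite /relevant h orbT.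
pose f := fun p : Assign Om * Assign Om => (mix p.1 p.2, mix p.2 p.1).
have finj : injective f.
  apply: (@can_inj _ _ f f) => -[s r]; rewrite /f /=; congr pair;
  by rewrite /mix; apply/ffunP => w; rewrite !ffunE; case: ifP => h; rewrite h.
have cardle : forall (Z1 Z2 : PAssign Q) (a : Q v),
    (forall w, w \in W -> w != v -> Z1 w = Z2 w) ->
    (forall c, not_sat_minus pi vbl bad Z1 v c -> (vbl c \subset W) || [disjoint vbl c & W]) ->
    (forall c, not_sat_minus pi vbl bad Z2 v c -> (vbl c \subset W) || [disjoint vbl c & W]) ->
    (condnum pi vbl bad Z1 a * condden pi vbl bad v Z2 <=
     condnum pi vbl bad Z2 a * condden pi vbl bad v Z1)%N.
  move=> Z1 Z2 a HZ HC1 HC2.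
  rewrite /condnum /condden -!cardsX -(card_imset _ finj).
  apply: subset_leq_card; apply/fintype.subsetP => q /imsetP [[s r] pin ->].
  move: pin; rewrite !inE /= => /andP [/and3P [ss cs1 pa] /andP [sr cr]].
  have [m1 m2] := andP (mixok Z1 Z2 s r HZ HC2 ss cs1 sr cr).
  have HZ' : forall w, w \in W -> w != v -> Z2 w = Z1 w by move=> w a1 a2; rewrite HZ.
  have [m3 m4] := andP (mixok Z2 Z1 r s HZ' HC1 sr cr ss cs1).
  by rewrite m1 m2 m3 m4 /= /mix ffunE vW pa.
have H1' : forall w, w \in W -> w != v -> Yo w = Xo w by move=> w a1 a2; rewrite H1.
have cardeq : forall a : Q v, (condnum pi vbl bad Xo a * condden pi vbl bad v Yo =
     condnum pi vbl bad Yo a * condden pi vbl bad v Xo)%N.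
  move=> a; apply/eqP; rewrite eqn_leq cardle //= cardle //.
have dX : condden pi vbl bad v Xo != 0%N.
  apply/negP => /eqP d0.
  have e : nu (X t v) (Y t v) = 0.
    apply: (psumr_eq0P (P:=xpredT) (fun b _ => nu0 (X t v) b)) => //.
    by rewrite nuA /cond d0 invr0 mulr0.
  by move: pos; rewrite e ltxx.
have dY : condden pi vbl bad v Yo != 0%N.
  apply/negP => /eqP d0.
  have e : nu (X t v) (Y t v) = 0.
    apply: (psumr_eq0P (P:=xpredT) (fun a _ => nu0 a (Y t v))) => //.
    by rewrite nuB /cond d0 invr0 mulr0.
  by move: pos; rewrite e ltxx.
have ceq : forall a : Q v, cond R pi vbl bad Xo a = cond R pi vbl bad Yo a.
  move=> a; apply/eqP; rewrite /cond eqr_div ?pnatr_eq0 //.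
  by rewrite -!natrM cardeq.
have d0 : dTV (@cond R _ _ _ pi _ vbl bad v Xo) (@cond R _ _ _ pi _ vbl bad v Yo) = 0.
  rewrite /dTV big1 ?mulr0 // => a _; by rewrite ceq subrr normr0.
rewrite d0 in nuD.
have e1 := psumr_eq0P (P := xpredT) (F := fun a => \sum_(b | b != a) nu a b)
  (fun a _ => sumr_ge0 _ (fun b _ => nu0 a b)) nuD (i := X t v) isT.
have e := psumr_eq0P (P := fun b => b != X t v) (F := fun b => nu (X t v) b)
  (fun b _ => nu0 (X t v) b) e1 (i := Y t v).
rewrite eq_sym neq in e.
by move: pos; rewrite e // ltxx.
Qed.
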